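(* Let $0<a,b<1$, $r>as$, $s>br$. For every $\alpha\in(\rho_1,1)\cap[0,1)$, $\beta\in(\rho_2,1)\cap[0,1)$ and every $x,y>0$, $$V(T_{\alpha,\beta}(x,y))-V(x,y)\le -bx\,\Psi(\alpha,X,r)-ay\,\Psi(\beta,Y,s)\le 0,$$ where $X=r-x-ay$, $Y=s-bx-y$; moreover $V(T_{\alpha,\beta}(x,y))-V(x,y)<0$ for every $(x,y)\ne(p,q)$ with $x,y>0$.
   Context: $p=\frac{r-as}{1-ab}$, $q=\frac{s-br}{1-ab}$. $T_{\alpha,\beta}(x,y)=\big(x[(1-\alpha)e^{r-x-ay}+\alpha],\,y[(1-\beta)e^{s-bx-y}+\beta]\big)$. $V(x,y)=bx^2+ay^2+2abxy-2rbx-2say$. For $u\in\mathbb R$, $\varsigma\in[0,1)$, $t>0$: $\Phi(\varsigma,u,t)=(1-\varsigma)(1-e^u)(t-u)+2u$ and $\Psi(\varsigma,u,t)=(1-\varsigma)(e^u-1)\Phi(\varsigma,u,t)$. $\rho_1=\frac{e^{r-2}-1}{e^{r-2}+1}$, $\rho_2=\frac{e^{s-2}-1}{e^{s-2}+1}$. *)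

(* Defs.v *)
From Stdlib Require Import Reals.
Open Scope R_scope.

Definition pP (a b r s : R) : R := (r - a * s) / (1 - a * b).
Definition qQ (a b r s : R) : R := (s - b * r) / (1 - a * b).

Definition T (a b r s alpha beta : R) (xy : R * R) : R * R :=
  let (x, y) := xy in
  (x * ((1 - alpha) * exp (r - x - a * y) + alpha),
   y * ((1 - beta) * exp (s - b * x - y) + beta)).

Definition V (a b r s : R) (xy : R * R) : R :=
  let (x, y) := xy in
  b * x ^ 2 + a * y ^ 2 + 2 * a * b * x * y - 2 * r * b * x - 2 * s * a * y.

Definition Phi (vs u t : R) : R :=
  (1 - vs) * (1 - exp u) * (t - u) + 2 * u.

Definition Psi (vs u t : R) : R :=
  (1 - vs) * (exp u - 1) * Phi vs u t.

Definition rho (r : R) : R := (exp (r - 2) - 1) / (exp (r - 2) + 1).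

(* Main.v *)
Require Import Defs.
From Stdlib Require Import Reals Lra Psatz.
From Coquelicot Require Import Coquelicot.
Open Scope R_scope.

Lemma hder_pos (c r z : R) : 0 < c -> c * (1 + exp (r - 2)) < 2 ->
  0 < 2 - c + c * exp z * (1 - r + z).
Proof.
  intros Hc Hcr.
  pose (w := z - r + 2).
  assert (E : exp z = exp w * exp (r - 2)) by (rewrite <- exp_plus; f_equal; unfold w; ring).
  assert (H1 := exp_ineq1_le (- w)).
  assert (H2 : exp w * exp (- w) = 1) by (rewrite <- exp_plus; replace (w + - w) with 0 by ring; apply exp_0).
  assert (Hw : 0 < exp w) by apply exp_pos.
  assert (He : 0 < exp (r - 2)) by apply exp_pos.
  assert (H3 : exp w * (1 - w) <= 1) by nra.
  assert (H4 : exp z * (1 - r + z) >= - exp (r - 2)).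
  { rewrite E. replace (1 - r + z) with (w - 1) by (unfold w; ring). nra. }
  nra.
Qed.

Lemma h_sign (c r X : R) : 0 < c -> c * (1 + exp (r - 2)) < 2 ->
  (0 < X -> 0 < c * (1 - exp X) * (r - X) + 2 * X) /\
  (X < 0 -> c * (1 - exp X) * (r - X) + 2 * X < 0).
Proof.
  intros Hc Hcr.
  pose (h := fun t => c * (1 - exp t) * (r - t) + 2 * t).
  pose (dh := fun t => 2 - c + c * exp t * (1 - r + t)).
  assert (Hd : forall t, is_derive h t (dh t)).
  { intro t. unfold h, dh. auto_derive; auto. ring. }
  assert (Hcont : forall t, continuity_pt h t).
  { intro t. unfold h. reg. }
  assert (h0 : h 0 = 0) by (unfold h; rewrite exp_0; ring).
  split; intro HX.
  - destruct (MVT_gen h 0 X dh (fun t _ => Hd t) (fun t _ => Hcont t)) as [ξ [_ Hξ]].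
    change (0 < h X). assert (P := hder_pos c r ξ Hc Hcr). fold (dh ξ) in P.
    nra.
  - destruct (MVT_gen h 0 X dh (fun t _ => Hd t) (fun t _ => Hcont t)) as [ξ [_ Hξ]].
    change (h X < 0). assert (P := hder_pos c r ξ Hc Hcr). fold (dh ξ) in P.
    nra.
Qed.

Lemma rho_c (r alpha : R) : rho r < alpha -> (1 - alpha) * (1 + exp (r - 2)) < 2.
Proof.
  unfold rho. intro H. assert (He : 0 < exp (r - 2)) by apply exp_pos.
  apply Rmult_lt_compat_r with (r := exp (r - 2) + 1) in H; [|lra].
  unfold Rdiv in H. rewrite Rmult_assoc, Rinv_l in H by lra. lra.
Qed.

Lemma Psi_nonneg (alpha r X : R) : alpha < 1 -> rho r < alpha ->
  0 <= Psi alpha X r /\ (X <> 0 -> 0 < Psi alpha X r).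
Proof.
  intros Ha Hr. assert (Hc : 0 < 1 - alpha) by lra.
  destruct (h_sign (1 - alpha) r X Hc (rho_c r alpha Hr)) as [Hp Hn].
  unfold Psi, Phi.
  destruct (Rtotal_order X 0) as [HX|[HX|HX]].
  - assert (exp X < 1) by (rewrite <- exp_0; apply exp_increasing; lra).
    specialize (Hn HX).
    assert (0 < (1 - alpha) * ((exp X - 1) * ((1 - alpha) * (1 - exp X) * (r - X) + 2 * X))).
    { apply Rmult_lt_0_compat; nra. }
    rewrite Rmult_assoc. split; [|intros _]; lra.
  - subst X. rewrite exp_0. split; [lra | intros []; reflexivity].
  - assert (1 < exp X) by (rewrite <- exp_0; apply exp_increasing; lra).
    specialize (Hp HX).
    assert (0 < (1 - alpha) * ((exp X - 1) * ((1 - alpha) * (1 - exp X) * (r - X) + 2 * X))).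
    { apply Rmult_lt_0_compat; nra. }
    rewrite Rmult_assoc. split; [|intros _]; lra.
Qed.

Theorem mainTheorem8 (a b r s : R) :
  0 < a < 1 -> 0 < b < 1 -> r > a * s -> s > b * r ->
  forall alpha beta : R,
    rho r < alpha < 1 -> 0 <= alpha ->
    rho s < beta < 1 -> 0 <= beta ->
    forall x y : R, 0 < x -> 0 < y ->
      let X := r - x - a * y in
      let Y := s - b * x - y in
      let D := V a b r s (T a b r s alpha beta (x, y)) - V a b r s (x, y) in
      D <= - b * x * Psi alpha X r - a * y * Psi beta Y s /\
      - b * x * Psi alpha X r - a * y * Psi beta Y s <= 0 /\
      ((x, y) <> (pP a b r s, qQ a b r s) -> D < 0).
Proof.
  intros Ha Hb Hr Hs alpha beta [Hra Ha1] Ha0 [Hsb Hb1] Hb0 x y Hx Hy X Y D.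
  destruct (Psi_nonneg alpha r X Ha1 Hra) as [P1 P1s].
  destruct (Psi_nonneg beta s Y Hb1 Hsb) as [P2 P2s].
  assert (HD : D <= - b * x * Psi alpha X r - a * y * Psi beta Y s).
  { unfold D, T, V, Psi, Phi. fold X Y.
    pose (u := x * (1 - alpha) * (exp X - 1)).
    pose (v := y * (1 - beta) * (exp Y - 1)).
    assert (Eq : - b * x * ((1 - alpha) * (exp X - 1) * ((1 - alpha) * (1 - exp X) * (r - X) + 2 * X)) -
      a * y * ((1 - beta) * (exp Y - 1) * ((1 - beta) * (1 - exp Y) * (s - Y) + 2 * Y)) -
      (b * (x * ((1 - alpha) * exp X + alpha)) ^ 2 + a * (y * ((1 - beta) * exp Y + beta)) ^ 2 +
       2 * a * b * (x * ((1 - alpha) * exp X + alpha)) * (y * ((1 - beta) * exp Y + beta)) -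
       2 * r * b * (x * ((1 - alpha) * exp X + alpha)) - 2 * s * a * (y * ((1 - beta) * exp Y + beta)) -
       (b * x ^ 2 + a * y ^ 2 + 2 * a * b * x * y - 2 * r * b * x - 2 * s * a * y))
      = a * b * (u * y - v * x) ^ 2 / (x * y)).
    { unfold u, v, X, Y. field. lra. }
    assert (0 <= a * b * (u * y - v * x) ^ 2 / (x * y)).
    { apply Rmult_le_pos; [|left; apply Rinv_0_lt_compat; nra].
      apply Rmult_le_pos; [nra|]. apply pow2_ge_0. }
    lra. }
  assert (Q1 : 0 <= b * x * Psi alpha X r) by (apply Rmult_le_pos; [nra|exact P1]).
  assert (Q2 : 0 <= a * y * Psi beta Y s) by (apply Rmult_le_pos; [nra|exact P2]).
  split; [exact HD|]. split; [lra|].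
  intro Hne.
  destruct (Req_dec X 0) as [HX|HX].
  - destruct (Req_dec Y 0) as [HY|HY].
    + exfalso. apply Hne. unfold X in HX. unfold Y in HY.
      assert (1 - a * b <> 0) by nra.
      unfold pP, qQ. f_equal; field_simplify_eq; auto; nra.
    + specialize (P2s HY).
      assert (0 < a * y * Psi beta Y s) by (apply Rmult_lt_0_compat; [nra|exact P2s]). lra.
  - specialize (P1s HX).
    assert (0 < b * x * Psi alpha X r) by (apply Rmult_lt_0_compat; [nra|exact P1s]). lra.
Qed.
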